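(* For any set of rule schemes $\mathcal{R}\subseteq\{N,H,P,F,wF\}$ there exists a non-commutative spacetime $\mathcal{S}\in\mathbf{ST}(\mathcal{R})$ such that for every sequent, if $\mathcal{S}\vDash\Gamma\Rightarrow A$ then $\Gamma\vdash_{\mathbf{STL}(\mathcal{R})}A$. Likewise there exists a spacetime $\mathcal{S}\in i\mathbf{ST}(\mathcal{R})$ such that if $\mathcal{S}\vDash\Gamma\Rightarrow A$ then $\Gamma\vdash_{i\mathbf{STL}(\mathcal{R})}A$.
   Context: Formulas of $\mathcal{L}_\nabla$ are built from propositional variables and constants $1,\top,\bot$ by binary $\wedge,\vee,\otimes,\to$ and unary $\nabla$. A sequent is $\Gamma\Rightarrow A$ with $\Gamma$ a finite (possibly empty) sequence; $\nabla\Gamma$ applies $\nabla$ to each member. $\mathbf{STL}$ has axioms $A\Rightarrow A$, $\Rightarrow1$, $\nabla1\Rightarrow1$, $\Gamma\Rightarrow\top$, $\Gamma,\bot,\Sigma\Rightarrow A$ and rules (premises / conclusion): cut: $\Gamma\Rightarrow A$, $\Pi,A,\Sigma\Rightarrow B$ / $\Pi,\Gamma,\Sigma\Rightarrow B$; $L\wedge$: $\Gamma,A,\Sigma\Rightarrow C$ / $\Gamma,A\wedge B,\Sigma\Rightarrow C$ and $\Gamma,B,\Sigma\Rightarrow C$ / $\Gamma,A\wedge B,\Sigma\Rightarrow C$; $R\wedge$: $\Gamma\Rightarrow A$, $\Gamma\Rightarrow B$ / $\Gamma\Rightarrow A\wedge B$; $L\vee$: $\Gamma,A,\Sigma\Rightarrow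 C$, $\Gamma,B,\Sigma\Rightarrow C$ / $\Gamma,A\vee B,\Sigma\Rightarrow C$; $R\vee$: $\Gamma\Rightarrow A$ / $\Gamma\Rightarrow A\vee B$ and $\Gamma\Rightarrow B$ / $\Gamma\Rightarrow A\vee B$; $L1$: $\Gamma,\Sigma\Rightarrow A$ / $\Gamma,1,\Sigma\Rightarrow A$; $L\otimes$: $\Gamma,A,B,\Sigma\Rightarrow C$ / $\Gamma,A\otimes B,\Sigma\Rightarrow C$; $R\otimes$: $\Gamma\Rightarrow A$, $\Sigma\Rightarrow B$ / $\Gamma,\Sigma\Rightarrow A\otimes B$; $(\nabla)$: $A\Rightarrow B$ / $\nabla A\Rightarrow\nabla B$; Oplax: $\nabla A,\nabla B\Rightarrow C$ / $\nabla(A\otimes B)\Rightarrow C$; $L\to$: $\Gamma\Rightarrow A$, $\Pi,B,\Sigma\Rightarrow C$ / $\Pi,\Gamma,\nabla(A\to B),\Sigma\Rightarrow C$; $R\to$: $A,\nabla\Gamma\Rightarrow B$ / $\Gamma\Rightarrow A\to B$. Rule schemes: $(N)$: $\Gamma\Rightarrow A$ / $\nabla\Gamma\Rightarrow\nabla A$; $(P)$: $\Gamma\Rightarrow\nabla A$ / $\Gamma\Rightarrow A$; $(F)$: $\Gamma\Rightarrow A$ / $\Gamma\Rightarrow\nabla A$; $(wF)$: $\nabla A\Rightarrow\bot$ / $A\Rightarrow\bot$; $(H)$: $\Gamma,A_1\to B_1,\dots,A_n\to B_n\Rightarrow C$ / $\nabla\Gamma,\nabla A_1\to\nabla B_1,\dots,\nabla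 A_n\to\nabla B_n\Rightarrow\nabla C$ ($n\ge0$). Structural rules: weakening, contraction and exchange on the left of $\Rightarrow$. $\mathbf{STL}(\mathcal{R})$ is $\mathbf{STL}$ plus the schemes in $\mathcal{R}$; $i\mathbf{STL}(\mathcal{R})$ adds the structural rules; $\Gamma\vdash_L A$ means $L$ derives $\Gamma\Rightarrow A$. Semantics: a quantale is a monoidal poset (monoid with multiplication monotone in each argument) with all joins over which multiplication distributes; a locale is a quantale whose multiplication is binary meet with unit the top. A non-commutative spacetime is $\mathcal{S}=(\mathscr{X},\nabla)$ with $\mathscr{X}$ a quantale and $\nabla$ join preserving and oplax monoidal; a spacetime is one with $\mathscr{X}$ a locale. Its implication $\to_{\mathcal{S}}$ is characterized by $a\otimes\nabla b\le c$ iff $b\le a\to_{\mathcal{S}}c$. A valuation $V$ maps formulas to $\mathscr{X}$ with $V(1)=e$, $V(\bot)$ bottom, $V(\top)$ top, commuting with $\wedge,\vee,\otimes,\nabla,\to$ (meet, join, $\otimes$, $\nabla$, $\to_{\mathcal{S}}$). $\mathcal{S}\vDash\gamma_1,\dots,\gamma_n\Rightarrow A$ iff $V(\gamma_1)\otimes\cdots\otimes V(\gamma_n)\le V(A)$ for all $V$ (empty product $=e$). $\mathcal{S}$ satisfies $(N)$ if $\nabla e=e$ and $\nabla(a\otimes b)=\nabla a\otimes\nabla b$; $(H)$ if $\nabla$ preserves all structure including the implication; $(P)$ if $\nabla a\le a$; $(F)$ if $a\le\nabla a$; $(wF)$ if $\nabla a=0$ implies $a=0$. $\mathbf{ST}(\mathcal{R})$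 (resp. $i\mathbf{ST}(\mathcal{R})$) is the class of non-commutative spacetimes (resp. spacetimes) satisfying all schemes in $\mathcal{R}$. *)

(* Defs.v *)
From Stdlib Require Import List.
Import ListNotations.
Set Implicit Arguments.

Inductive formula : Type :=
| Var : nat -> formula
| One : formula
| Top : formula
| Bot : formula
| And : formula -> formula -> formula
| Or : formula -> formula -> formula
| Tens : formula -> formula -> formula
| Imp : formula -> formula -> formula
| Nab : formula -> formula.

Definition nabs (G : list formula) : list formula := map Nab G.

Inductive scheme : Type := sN | sH | sP | sF | swF.

(* ---------- Sequent calculus ----------
   derivable R st G A : the sequent G => A is derivable in STL(R) (st = false)
   or in iSTL(R) (st = true, structural rules added). R is a set of schemes. *)
Inductive derivable (R : scheme -> Prop) (st : bool) : list formula -> formula -> Prop :=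
| ax_id : forall A, derivable R st [A] A
| ax_one : derivable R st [] One
| ax_nabone : derivable R st [Nab One] One
| ax_top : forall G, derivable R st G Top
| ax_bot : forall G S A, derivable R st (G ++ Bot :: S) A
| r_cut : forall G P S A B,
    derivable R st G A -> derivable R st (P ++ A :: S) B ->
    derivable R st (P ++ G ++ S) B
| r_Land1 : forall G S A B C,
    derivable R st (G ++ A :: S) C -> derivable R st (G ++ And A B :: S) C
| r_Land2 : forall G S A B C,
    derivable R st (G ++ B :: S) C -> derivable R st (G ++ And A B :: S) C
| r_Rand : forall G A B,
    derivable R st G A -> derivable R st G B -> derivable R st G (And A B)
| r_Lor : forall G S A B C,
    derivable R st (G ++ A :: S) C -> derivable R st (G ++ B :: S) C ->
    derivable R st (G ++ Or A B :: S) C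
| r_Ror1 : forall G A B, derivable R st G A -> derivable R st G (Or A B)
| r_Ror2 : forall G A B, derivable R st G B -> derivable R st G (Or A B)
| r_L1 : forall G S A, derivable R st (G ++ S) A -> derivable R st (G ++ One :: S) A
| r_Ltens : forall G S A B C,
    derivable R st (G ++ A :: B :: S) C -> derivable R st (G ++ Tens A B :: S) C
| r_Rtens : forall G S A B,
    derivable R st G A -> derivable R st S B -> derivable R st (G ++ S) (Tens A B)
| r_nab : forall A B, derivable R st [A] B -> derivable R st [Nab A] (Nab B)
| r_oplax : forall A B C,
    derivable R st [Nab A; Nab B] C -> derivable R st [Nab (Tens A B)] C
| r_Limp : forall G P S A B C,
    derivable R st G A -> derivable R st (P ++ B :: S) C ->
    derivable R st (P ++ G ++ Nab (Imp A B) :: S) C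
| r_Rimp : forall G A B,
    derivable R st (A :: nabs G) B -> derivable R st G (Imp A B)
| r_N : forall G A, R sN -> derivable R st G A -> derivable R st (nabs G) (Nab A)
| r_P : forall G A, R sP -> derivable R st G (Nab A) -> derivable R st G A
| r_F : forall G A, R sF -> derivable R st G A -> derivable R st G (Nab A)
| r_wF : forall A, R swF -> derivable R st [Nab A] Bot -> derivable R st [A] Bot
| r_H : forall G (ps : list (formula * formula)) C, R sH ->
    derivable R st (G ++ map (fun p => Imp (fst p) (snd p)) ps) C ->
    derivable R st (nabs G ++ map (fun p => Imp (Nab (fst p)) (Nab (snd p))) ps) (Nab C)
| r_weak : forall G S A C, st = true ->
    derivable R st (G ++ S) C -> derivable R st (G ++ A :: S) C
| r_contr : forall G S A C, st = true ->
    derivable R st (G ++ A :: A :: S) C -> derivable R st (G ++ A :: S) C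
| r_exch : forall G S A B C, st = true ->
    derivable R st (G ++ A :: B :: S) C -> derivable R st (G ++ B :: A :: S) C.

Record ncspacetime : Type := {
  car :> Type;
  le : car -> car -> Prop;
  join : (car -> Prop) -> car;
  mul : car -> car -> car;
  unit : car;
  nab : car -> car;
  le_refl : forall a, le a a;
  le_trans : forall a b c, le a b -> le b c -> le a c;
  le_antisym : forall a b, le a b -> le b a -> a = b;
  join_ub : forall (S : car -> Prop) x, S x -> le x (join S);
  join_least : forall (S : car -> Prop) y, (forall x, S x -> le x y) -> le (join S) y;
  mul_assoc : forall a b c, mul a (mul b c) = mul (mul a b) c;
  mul_1l : forall a, mul unit a = a;
  mul_1r : forall a, mul a unit = a;
  mul_mono : forall a a' b b', le a a' -> le b b' -> le (mul a b) (mul a' b');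
  mul_join_l : forall a (S : car -> Prop),
    mul a (join S) = join (fun y => exists x, S x /\ y = mul a x);
  mul_join_r : forall a (S : car -> Prop),
    mul (join S) a = join (fun y => exists x, S x /\ y = mul x a);
  nab_join : forall (S : car -> Prop),
    nab (join S) = join (fun y => exists x, S x /\ y = nab x);
  nab_oplax_mul : forall a b, le (nab (mul a b)) (mul (nab a) (nab b));
  nab_oplax_unit : le (nab unit) unit
}.

Section Ops.
Variable X : ncspacetime.
Definition bot : X := join X (fun _ => False).
Definition top : X := join X (fun _ => True).
Definition meet (a b : X) : X := join X (fun x => le X x a /\ le X x b).
(* the implication: right adjoint, a ⊗ ∇b ≤ c  iff  b ≤ a -> c *)
Definition impl (a c : X) : X := join X (fun b => le X (mul X a (nab X b)) c).

Fixpoint eval (v : nat -> X) (F : formula) : X :=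
  match F with
  | Var n => v n
  | One => unit X
  | Top => top
  | Bot => bot
  | And A B => meet (eval v A) (eval v B)
  | Or A B => join X (fun x => x = eval v A \/ x = eval v B)
  | Tens A B => mul X (eval v A) (eval v B)
  | Imp A B => impl (eval v A) (eval v B)
  | Nab A => nab X (eval v A)
  end.

Definition prod (l : list X) : X := fold_right (mul X) (unit X) l.

Definition models (G : list formula) (A : formula) : Prop :=
  forall v : nat -> X, le X (prod (map (eval v) G)) (eval v A).

(* a spacetime: the quantale is a locale (mult = binary meet, unit = top) *)
Definition is_locale : Prop :=
  (forall a b, mul X a b = meet a b) /\ unit X = top.

Definition sat_scheme (s : scheme) : Prop :=
  match s with
  | sN => nab X (unit X) = unit X /\ forall a b, nab X (mul X a b) = mul X (nab X a) (nab X b)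
  | sH => nab X (unit X) = unit X /\ (forall a b, nab X (mul X a b) = mul X (nab X a) (nab X b))
          /\ forall a b, nab X (impl a b) = impl (nab X a) (nab X b)
  | sP => forall a, le X (nab X a) a
  | sF => forall a, le X a (nab X a)
  | swF => forall a, nab X a = bot -> a = bot
  end.

Definition in_ST (R : scheme -> Prop) : Prop := forall s, R s -> sat_scheme s.
Definition in_iST (R : scheme -> Prop) : Prop := is_locale /\ in_ST R.
End Ops.

(* Main.v *)
Require Import Defs.
From Stdlib Require Import List.
Import ListNotations.
From Stdlib Require Import FunctionalExtensionality PropExtensionality ProofIrrelevance.

Section Lind.
Variable R : scheme -> Prop.
Variable st : bool.
Notation d := (derivable R st).
Definition lef (a b : formula) := d [a] b.

Lemma lef_refl a : lef a a. Proof. apply ax_id. Qed.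
Lemma lef_trans a b c : lef a b -> lef b c -> lef a c.
Proof. intros H1 H2. exact (r_cut [] [] H1 H2). Qed.
Lemma cutR G a c : d G a -> lef a c -> d G c.
Proof. intros H1 H2. pose proof (r_cut [] [] H1 H2) as H. simpl in H. rewrite app_nil_r in H. exact H. Qed.

Lemma or_le a b c : lef a c -> lef b c -> lef (Or a b) c.
Proof. intros. exact (r_Lor [] [] a b H H0). Qed.
Lemma le_or1 a b : lef a (Or a b). Proof. apply r_Ror1, ax_id. Qed.
Lemma le_or2 a b : lef b (Or a b). Proof. apply r_Ror2, ax_id. Qed.
Lemma bot_le a : lef Bot a. Proof. exact (ax_bot R st [] [] a). Qed.

Fixpoint bigor (l : list formula) : formula :=
  match l with [] => Bot | x :: l => Or x (bigor l) end.

Lemma le_bigor u l : In u l -> lef u (bigor l).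
Proof.
  induction l as [|x l IH]; simpl; intros H; [contradiction|].
  destruct H as [->|H]. apply le_or1. eapply lef_trans; [apply IH; exact H| apply le_or2].
Qed.
Lemma bigor_le l c : (forall u, In u l -> lef u c) -> lef (bigor l) c.
Proof.
  induction l as [|x l IH]; simpl; intros H. apply bot_le.
  apply or_le; auto.
Qed.

Lemma tens_mono a b a' b' : lef a a' -> lef b b' -> lef (Tens a b) (Tens a' b').
Proof. intros H1 H2. exact (r_Ltens [] [] _ _ (r_Rtens H1 H2)). Qed.
Lemma tens_split a b c : d [a; b] c -> lef (Tens a b) c.
Proof. intros H. exact (r_Ltens [] [] _ _ H). Qed.
Lemma tens_intro a b : d [a; b] (Tens a b).
Proof. exact (r_Rtens (ax_id R st a) (ax_id R st b)). Qed.
Lemma tens_unsplit a b c : lef (Tens a b) c -> d [a; b] c.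
Proof. intros H. eapply cutR. apply tens_intro. exact H. Qed.

Lemma tens_assoc1 a b c : lef (Tens a (Tens b c)) (Tens (Tens a b) c).
Proof.
  apply tens_split. apply (r_Ltens [a] []).
  exact (r_Rtens (tens_intro a b) (ax_id R st c)).
Qed.
Lemma tens_assoc2 a b c : lef (Tens (Tens a b) c) (Tens a (Tens b c)).
Proof.
  apply tens_split. apply (r_Ltens [] [c]).
  exact (r_Rtens (ax_id R st a) (tens_intro b c)).
Qed.
Lemma one_tens a : lef (Tens One a) a.
Proof. apply tens_split. apply (r_L1 [] [a]). apply ax_id. Qed.
Lemma tens_one a : lef (Tens a One) a.
Proof. apply tens_split. apply (r_L1 [a] []). apply ax_id. Qed.
Lemma le_one_tens a : lef a (Tens One a).
Proof. exact (r_Rtens (ax_one R st) (ax_id R st a)). Qed.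
Lemma le_tens_one a : lef a (Tens a One).
Proof. exact (r_Rtens (ax_id R st a) (ax_one R st)). Qed.

Lemma nab_mono a b : lef a b -> lef (Nab a) (Nab b).
Proof. apply r_nab. Qed.
Lemma imp_elim a b : d [a; Nab (Imp a b)] b.
Proof. exact (r_Limp [] [] b (ax_id R st a) (ax_id R st b)). Qed.
Lemma nab_imp_one c : lef (Nab (Imp One c)) c.
Proof. exact (r_cut [] [Nab (Imp One c)] (ax_one R st) (imp_elim One c)). Qed.
Lemma nab_adj a c : lef a (Imp One c) -> lef (Nab a) c.
Proof. intros H. eapply lef_trans. apply nab_mono, H. apply nab_imp_one. Qed.
Lemma adj_nab a c : lef (Nab a) c -> lef a (Imp One c).
Proof. intros H. apply r_Rimp. simpl. exact (r_L1 [] [Nab a] H). Qed.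

Lemma imp_intro a b c : d [a; Nab b] c -> lef b (Imp a c).
Proof. intros H. apply r_Rimp. exact H. Qed.

Record jp (g : formula -> formula) : Prop := {
  jp_mono : forall a b, lef a b -> lef (g a) (g b);
  jp_bot : lef (g Bot) Bot;
  jp_or : forall a b, lef (g (Or a b)) (Or (g a) (g b)) }.

Lemma jp_id : jp (fun x => x).
Proof. split; auto using lef_refl. Qed.
Lemma jp_comp g h : jp g -> jp h -> jp (fun x => g (h x)).
Proof.
  intros [g1 g2 g3] [h1 h2 h3]; split; intros.
  - auto.
  - eapply lef_trans. apply g1, h2. exact g2.
  - eapply lef_trans. apply g1, h3. apply g3.
Qed.
Lemma jp_nab : jp Nab.
Proof.
  split.
  - apply nab_mono.
  - apply nab_adj. apply bot_le.
  - intros a b. apply nab_adj. apply or_le; apply adj_nab; [apply le_or1|apply le_or2].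
Qed.
Lemma jp_tensL a : jp (fun x => Tens a x).
Proof.
  split.
  - intros; apply tens_mono; auto using lef_refl.
  - apply tens_split. exact (ax_bot R st [a] [] Bot).
  - intros x y. apply tens_split. apply (r_Lor [a] []).
    + apply r_Ror1, tens_intro.
    + apply r_Ror2, tens_intro.
Qed.
Lemma jp_tensR b : jp (fun x => Tens x b).
Proof.
  split.
  - intros; apply tens_mono; auto using lef_refl.
  - apply tens_split. exact (ax_bot R st [] [b] Bot).
  - intros x y. apply tens_split. apply (r_Lor [] [b]).
    + apply r_Ror1, tens_intro.
    + apply r_Ror2, tens_intro.
Qed.

Lemma jp_bigor g l : jp g -> lef (g (bigor l)) (bigor (map g l)).
Proof.
  intros [g1 g2 g3]. induction l as [|x l IH]; simpl. exact g2.
  eapply lef_trans. apply g3. apply or_le. apply le_or1.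
  eapply lef_trans. exact IH. apply le_or2.
Qed.


Record ideal : Type := {
  mem : formula -> Prop;
  i_down : forall a b, lef a b -> mem b -> mem a;
  i_bot : mem Bot;
  i_or : forall a b, mem a -> mem b -> mem (Or a b) }.

Lemma ideal_ext (I J : ideal) : (forall x, mem I x <-> mem J x) -> I = J.
Proof.
  destruct I as [m1 d1 b1 o1], J as [m2 d2 b2 o2]; simpl; intros H.
  assert (m1 = m2) by (extensionality x; apply propositional_extensionality; apply H).
  subst m2. f_equal; apply proof_irrelevance.
Qed.

Lemma mem_bigor (I : ideal) l : (forall u, In u l -> mem I u) -> mem I (bigor l).
Proof.
  induction l as [|x l IH]; simpl; intros H. apply i_bot.
  apply i_or; auto.
Qed.

Definition genP (U : formula -> Prop) (x : formula) : Prop :=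
  exists l, (forall u, In u l -> U u) /\ lef x (bigor l).

Definition gen (U : formula -> Prop) : ideal.
Proof.
  refine {| mem := genP U |}.
  - intros a b Hab [l [Hl Hb]]. exists l. split; auto. eapply lef_trans; eauto.
  - exists []. split. intros u []. apply lef_refl.
  - intros a b [l1 [H1 Ha]] [l2 [H2 Hb]]. exists (l1 ++ l2). split.
    + intros u Hu. apply in_app_or in Hu. destruct Hu; auto.
    + apply or_le.
      * eapply lef_trans. exact Ha. apply bigor_le. intros u Hu. apply le_bigor. apply in_or_app; auto.
      * eapply lef_trans. exact Hb. apply bigor_le. intros u Hu. apply le_bigor. apply in_or_app; auto.
Defined.

Lemma gen_incl U u : U u -> mem (gen U) u.
Proof. intros H. exists [u]. split. intros v [->|[]]; auto. apply le_or1. Qed.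

Lemma gen_lift g U (K : ideal) x : jp g -> (forall u, U u -> mem K (g u)) -> mem (gen U) x -> mem K (g x).
Proof.
  intros Hg HU [l [Hl Hx]].
  apply (i_down K _ (bigor (map g l))).
  - eapply lef_trans. apply (jp_mono _ Hg). exact Hx. apply jp_bigor, Hg.
  - apply mem_bigor. intros u Hu. apply in_map_iff in Hu. destruct Hu as [v [<- Hv]]. auto.
Qed.

Lemma gen_min U (K : ideal) x : (forall u, U u -> mem K u) -> mem (gen U) x -> mem K x.
Proof. intros H Hx. exact (gen_lift (fun y => y) U K x jp_id H Hx). Qed.

Definition pr (A : formula) : ideal.
Proof.
  refine {| mem := fun x => lef x A |}.
  - intros a b H1 H2. eapply lef_trans; eauto.
  - apply bot_le.
  - intros; apply or_le; auto.
Defined.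

Definition leI (I J : ideal) := forall x, mem I x -> mem J x.
Definition joinI (S : ideal -> Prop) : ideal := gen (fun x => exists I, S I /\ mem I x).
Definition mulI (I J : ideal) : ideal := gen (fun x => exists a b, mem I a /\ mem J b /\ x = Tens a b).
Definition unitI : ideal := gen (fun x => x = One).
Definition nabI (I : ideal) : ideal := gen (fun x => exists a, mem I a /\ x = Nab a).

Lemma mulI_in (I J : ideal) a b : mem I a -> mem J b -> mem (mulI I J) (Tens a b).
Proof. intros. apply gen_incl. eauto. Qed.
Lemma nabI_in (I : ideal) a : mem I a -> mem (nabI I) (Nab a).
Proof. intros. apply gen_incl. eauto. Qed.


Lemma mulI_lift g I J (K : ideal) y : jp g ->
  (forall a b, mem I a -> mem J b -> mem K (g (Tens a b))) -> mem (mulI I J) y -> mem K (g y).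
Proof. intros Hg H. apply (gen_lift g _ K y Hg). intros u [a [b [Ha [Hb ->]]]]. auto. Qed.
Lemma joinI_lift g S (K : ideal) y : jp g ->
  (forall I x, S I -> mem I x -> mem K (g x)) -> mem (joinI S) y -> mem K (g y).
Proof. intros Hg H. apply (gen_lift g _ K y Hg). intros u [I [HI Hu]]. eauto. Qed.
Lemma unitI_lift g (K : ideal) y : jp g -> mem K (g One) -> mem unitI y -> mem K (g y).
Proof. intros Hg H. apply (gen_lift g _ K y Hg). intros u ->. auto. Qed.
Lemma nabI_lift g I (K : ideal) y : jp g ->
  (forall a, mem I a -> mem K (g (Nab a))) -> mem (nabI I) y -> mem K (g y).
Proof. intros Hg H. apply (gen_lift g _ K y Hg). intros u [a [Ha ->]]. auto. Qed.

Lemma mulI_min (I J K : ideal) x :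
  (forall a b, mem I a -> mem J b -> mem K (Tens a b)) -> mem (mulI I J) x -> mem K x.
Proof.
  intros H. apply gen_min. intros u [a [b [Ha [Hb ->]]]]. auto.
Qed.

Lemma mulI_min_gen U V (K : ideal) x :
  (forall a b, U a -> V b -> mem K (Tens a b)) -> mem (mulI (gen U) (gen V)) x -> mem K x.
Proof.
  intros H. apply mulI_min. intros a b Ha Hb.
  apply (gen_lift (fun y => Tens y b) U K a (jp_tensR b)); auto.
  intros u Hu. apply (gen_lift (fun y => Tens u y) V K b (jp_tensL u)); auto.
Qed.

Lemma leI_refl I : leI I I. Proof. intros x; auto. Qed.
Lemma leI_trans I J K : leI I J -> leI J K -> leI I K. Proof. unfold leI; auto. Qed.
Lemma leI_antisym I J : leI I J -> leI J I -> I = J.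
Proof. intros. apply ideal_ext. split; auto. Qed.

Lemma join_ub (S : ideal -> Prop) I : S I -> leI I (joinI S).
Proof. intros HS x Hx. apply gen_incl. eauto. Qed.
Lemma join_least (S : ideal -> Prop) J : (forall I, S I -> leI I J) -> leI (joinI S) J.
Proof. intros H x. apply gen_min. intros u [I [HI Hu]]. exact (H I HI u Hu). Qed.

Lemma mul_assoc' I J K : mulI I (mulI J K) = mulI (mulI I J) K.
Proof.
  apply leI_antisym; intros x.
  - apply mulI_min. intros a y Ha Hy.
    refine (mulI_lift (fun z => Tens a z) _ _ _ y (jp_tensL a) _ Hy).
    intros b c Hb Hc.
    eapply i_down. apply tens_assoc1. apply mulI_in; auto. apply mulI_in; auto.
  - apply mulI_min. intros y c Hy Hc.
    refine (mulI_lift (fun z => Tens z c) _ _ _ y (jp_tensR c) _ Hy).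
    intros a b Ha Hb.
    eapply i_down. apply tens_assoc2. apply mulI_in; auto. apply mulI_in; auto.
Qed.

Lemma mul_1l' I : mulI unitI I = I.
Proof.
  apply leI_antisym; intros x.
  - apply mulI_min. intros a y Ha Hy.
    refine (unitI_lift (fun z => Tens z y) _ a (jp_tensR y) _ Ha). eapply i_down. apply one_tens. auto.
  - intros Hx. eapply i_down. apply le_one_tens. apply mulI_in; auto. apply gen_incl; auto.
Qed.

Lemma mul_1r' I : mulI I unitI = I.
Proof.
  apply leI_antisym; intros x.
  - apply mulI_min. intros y a Hy Ha.
    refine (unitI_lift (fun z => Tens y z) _ a (jp_tensL y) _ Ha). eapply i_down. apply tens_one. auto.
  - intros Hx. eapply i_down. apply le_tens_one. apply mulI_in; auto. apply gen_incl; auto.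
Qed.

Lemma mul_mono' I I' J J' : leI I I' -> leI J J' -> leI (mulI I J) (mulI I' J').
Proof.
  intros H1 H2 x. apply mulI_min. intros a b Ha Hb. apply mulI_in; auto.
Qed.

Lemma mul_join_l' I (S : ideal -> Prop) :
  mulI I (joinI S) = joinI (fun y => exists x, S x /\ y = mulI I x).
Proof.
  apply leI_antisym.
  - intros x. apply mulI_min. intros a y Ha Hy.
    refine (joinI_lift (fun z => Tens a z) _ _ y (jp_tensL a) _ Hy).
    intros J u HJ Hu.
    apply (join_ub _ (mulI I J)). eauto. apply mulI_in; auto.
  - apply join_least. intros K [J [HJ ->]]. apply mul_mono'. apply leI_refl. apply join_ub; auto.
Qed.

Lemma mul_join_r' I (S : ideal -> Prop) :
  mulI (joinI S) I = joinI (fun y => exists x, S x /\ y = mulI x I).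
Proof.
  apply leI_antisym.
  - intros x. apply mulI_min. intros y a Hy Ha.
    refine (joinI_lift (fun z => Tens z a) _ _ y (jp_tensR a) _ Hy).
    intros J u HJ Hu.
    apply (join_ub _ (mulI J I)). eauto. apply mulI_in; auto.
  - apply join_least. intros K [J [HJ ->]]. apply mul_mono'. apply join_ub; auto. apply leI_refl.
Qed.

Lemma nabI_min (I K : ideal) x : (forall a, mem I a -> mem K (Nab a)) -> mem (nabI I) x -> mem K x.
Proof. intros H. apply gen_min. intros u [a [Ha ->]]. auto. Qed.

Lemma nab_mono' I J : leI I J -> leI (nabI I) (nabI J).
Proof. intros H x. apply nabI_min. intros a Ha. apply nabI_in; auto. Qed.

Lemma nab_join' (S : ideal -> Prop) :
  nabI (joinI S) = joinI (fun y => exists x, S x /\ y = nabI x).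
Proof.
  apply leI_antisym.
  - intros x. apply nabI_min. intros y Hy.
    refine (joinI_lift Nab _ _ y jp_nab _ Hy).
    intros J u HJ Hu.
    apply (join_ub _ (nabI J)). eauto. apply nabI_in; auto.
  - apply join_least. intros K [J [HJ ->]]. apply nab_mono'. apply join_ub; auto.
Qed.

Lemma nab_oplax_mul' I J : leI (nabI (mulI I J)) (mulI (nabI I) (nabI J)).
Proof.
  intros x. apply nabI_min. intros y Hy.
  refine (mulI_lift Nab _ _ _ y jp_nab _ Hy).
  intros a b Ha Hb.
  apply (i_down _ _ (Tens (Nab a) (Nab b))). apply r_oplax. apply tens_intro.
  apply mulI_in; apply nabI_in; auto.
Qed.

Lemma nab_oplax_unit' : leI (nabI unitI) unitI.
Proof.
  intros x. apply nabI_min. intros y Hy.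
  refine (unitI_lift Nab _ y jp_nab _ Hy). eapply i_down. apply ax_nabone. apply gen_incl; auto.
Qed.


Definition M : ncspacetime :=
  @Build_ncspacetime ideal leI joinI mulI unitI nabI leI_refl leI_trans leI_antisym
    join_ub join_least mul_assoc' mul_1l' mul_1r' mul_mono' mul_join_l' mul_join_r'
    nab_join' nab_oplax_mul' nab_oplax_unit'.

Lemma gen_pr U A : (forall u, U u -> lef u A) -> mem (gen U) A -> gen U = pr A.
Proof.
  intros H1 H2. apply leI_antisym.
  - intros x. apply gen_min. exact H1.
  - intros x Hx. eapply i_down. exact Hx. exact H2.
Qed.

Lemma pr_eq A B : lef A B -> lef B A -> pr A = pr B.
Proof.
  intros H1 H2. apply leI_antisym; intros x Hx; simpl in *; eapply lef_trans; eauto.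
Qed.

Lemma unit_pr : unitI = pr One.
Proof. apply gen_pr. intros u ->; apply lef_refl. apply gen_incl; auto. Qed.

Lemma mul_pr A B : mulI (pr A) (pr B) = pr (Tens A B).
Proof.
  apply gen_pr.
  - intros u [a [b [Ha [Hb ->]]]]. apply tens_mono; auto.
  - apply mulI_in; apply lef_refl.
Qed.

Lemma nab_pr A : nabI (pr A) = pr (Nab A).
Proof.
  apply gen_pr.
  - intros u [a [Ha ->]]. apply nab_mono; auto.
  - apply nabI_in; apply lef_refl.
Qed.

Lemma bot_pr : @bot M = pr Bot.
Proof.
  apply gen_pr.
  - intros u [I [[] _]].
  - apply i_bot.
Qed.

Lemma top_pr : @top M = pr Top.
Proof.
  apply gen_pr.
  - intros u _. apply ax_top.
  - apply gen_incl. exists (pr Top). split; [exact I| apply lef_refl].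
Qed.

Lemma or_pr A B : join M (fun x => x = pr A \/ x = pr B) = pr (Or A B).
Proof.
  apply gen_pr.
  - intros u [I [[->| ->] Hu]]; simpl in Hu; eapply lef_trans; eauto using le_or1, le_or2.
  - apply i_or; apply gen_incl; [exists (pr A) | exists (pr B)]; split; auto; apply lef_refl.
Qed.

Lemma and_pr A B : @meet M (pr A) (pr B) = pr (And A B).
Proof.
  apply gen_pr.
  - intros u [X [[H1 H2] Hu]]. apply r_Rand; [apply (H1 u Hu)|apply (H2 u Hu)].
  - apply gen_incl. exists (pr (And A B)). split; [split|apply lef_refl].
    + intros x Hx. simpl in *. eapply lef_trans. exact Hx. exact (r_Land1 [] [] A B (ax_id R st A)).
    + intros x Hx. simpl in *. eapply lef_trans. exact Hx. exact (r_Land2 [] [] A B (ax_id R st B)).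
Qed.

Definition nabset (I : ideal) : ideal.
Proof.
  refine {| mem := fun x => exists j, mem I j /\ lef x (Nab j) |}.
  - intros a b Hab [j [Hj Hb]]. exists j. split; auto. eapply lef_trans; eauto.
  - exists Bot. split. apply i_bot. apply bot_le.
  - intros a b [j1 [H1 Ha]] [j2 [H2 Hb]]. exists (Or j1 j2). split. apply i_or; auto.
    apply or_le; eapply lef_trans; eauto; apply nab_mono; [apply le_or1|apply le_or2].
Defined.

Lemma nabI_char (I : ideal) x : mem (nabI I) x <-> exists j, mem I j /\ lef x (Nab j).
Proof.
  split.
  - intros Hx. change (mem (nabset I) x). revert Hx. apply nabI_min.
    intros a Ha. exists a. split; auto. apply lef_refl.
  - intros [j [Hj Hx]]. eapply i_down. exact Hx. apply nabI_in; auto.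
Qed.

Lemma impl_char (I K : ideal) b :
  mem (@impl M I K) b <-> forall a, mem I a -> mem K (Tens a (Nab b)).
Proof.
  split.
  - intros Hb a Ha.
    refine (joinI_lift (fun x => Tens a (Nab x)) _ _ b (jp_comp _ _ (jp_tensL a) jp_nab) _ Hb).
    intros X x HX Hx. apply HX. apply mulI_in; auto. apply nabI_in; auto.
  - intros H. apply (join_ub _ (pr b)).
    + intros x. apply mulI_min. intros a y Ha Hy.
      apply nabI_char in Hy. destruct Hy as [j [Hj Hy]].
      eapply i_down; [|apply (H a Ha)]. apply tens_mono. apply lef_refl.
      eapply lef_trans. exact Hy. apply nab_mono, Hj.
    + apply lef_refl.
Qed.

Lemma imp_pr A C : @impl M (pr A) (pr C) = pr (Imp A C).
Proof.
  apply leI_antisym; intros x.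
  - intros Hx. apply impl_char with (a := A) in Hx; [|apply lef_refl].
    apply imp_intro. apply tens_unsplit. exact Hx.
  - intros Hx. apply impl_char. intros a Ha. simpl in *.
    eapply lef_trans. apply tens_mono. exact Ha. apply nab_mono, Hx.
    apply tens_split. apply imp_elim.
Qed.

Lemma eval_pr F : eval M (fun n => pr (Var n)) F = pr F.
Proof.
  induction F; cbn [eval].
  - reflexivity.
  - apply unit_pr.
  - apply top_pr.
  - apply bot_pr.
  - rewrite IHF1, IHF2. apply and_pr.
  - rewrite IHF1, IHF2. apply or_pr.
  - rewrite IHF1, IHF2. apply mul_pr.
  - rewrite IHF1, IHF2. apply imp_pr.
  - rewrite IHF. apply nab_pr.
Qed.

Fixpoint tl (G : list formula) : formula :=
  match G with [] => One | x :: l => Tens x (tl l) end.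

Lemma prod_pr G : prod M (map pr G) = pr (tl G).
Proof.
  induction G as [|x l IH]; cbn [prod map fold_right tl].
  - apply unit_pr.
  - unfold prod in IH. rewrite IH. apply mul_pr.
Qed.

Lemma d_tl G : d G (tl G).
Proof.
  induction G as [|x l IH]; simpl. apply ax_one.
  exact (r_Rtens (ax_id R st x) IH).
Qed.

Lemma complete G A : models M G A -> d G A.
Proof.
  intros H. specialize (H (fun n => pr (Var n))).
  assert (E : map (eval M (fun n => pr (Var n))) G = map pr G).
  { apply map_ext. apply eval_pr. }
  rewrite E, eval_pr in H.
  change (leI (prod M (map pr G)) (pr A)) in H.
  rewrite prod_pr in H.
  eapply cutR. apply d_tl. apply (H (tl G)). apply lef_refl.
Qed.

Lemma N_rule : (R sN \/ R sH) -> forall G A, d G A -> d (nabs G) (Nab A).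
Proof.
  intros [HN|HH] G A H. apply r_N; auto.
  pose proof (@r_H R st G [] A HH) as H'. simpl in H'. rewrite !app_nil_r in H'. apply H'.
  exact H.
Qed.

Lemma nab_one_up : (R sN \/ R sH) -> lef One (Nab One).
Proof. intros HN. exact (r_L1 [] [] (N_rule HN [] One (ax_one R st))). Qed.

Lemma nab_tens_up : (R sN \/ R sH) -> forall a b, lef (Tens (Nab a) (Nab b)) (Nab (Tens a b)).
Proof. intros HN a b. apply tens_split. exact (N_rule HN [a; b] _ (tens_intro a b)). Qed.

Lemma sat_N : (R sN \/ R sH) -> nabI unitI = unitI /\ forall a b, nabI (mulI a b) = mulI (nabI a) (nabI b).
Proof.
  intros HN. split.
  - apply leI_antisym. apply nab_oplax_unit'.
    intros x. apply gen_min. intros u ->. eapply i_down. apply nab_one_up, HN.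
    apply nabI_in. apply gen_incl; auto.
  - intros I J. apply leI_antisym. apply nab_oplax_mul'.
    intros x. apply mulI_min_gen. intros u v [a [Ha ->]] [b [Hb ->]].
    eapply i_down. apply nab_tens_up, HN. apply nabI_in, mulI_in; auto.
Qed.

Lemma imp_one_mono a b : lef a b -> lef (Imp One a) (Imp One b).
Proof. intros H. apply imp_intro. eapply cutR. apply imp_elim. exact H. Qed.

Lemma H4 x : lef x (Imp One (Nab x)).
Proof. apply imp_intro. exact (r_L1 [] [Nab x] (ax_id R st (Nab x))). Qed.

Lemma H5 : R sH -> forall x, lef (Imp One (Nab x)) (Nab (Imp One x)).
Proof.
  intros HH x. eapply lef_trans.
  - apply imp_intro with (a := Nab One).
    exact (r_cut [] [Nab (Imp One (Nab x))] (ax_nabone R st) (imp_elim One (Nab x))).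
  - exact (r_H [] [(One, x)] HH (ax_id R st (Imp One x))).
Qed.

Lemma H1 : R sH -> forall x, lef x (Nab (Imp One x)).
Proof. intros HH x. eapply lef_trans. apply H4. apply H5, HH. Qed.

Lemma H3 : R sH -> forall x, lef (Imp One (Nab x)) x.
Proof. intros HH x. eapply lef_trans. apply H5, HH. apply nab_imp_one. Qed.

Lemma nabI_charH : R sH -> forall (I : ideal) x, mem (nabI I) x <-> mem I (Imp One x).
Proof.
  intros HH I x. rewrite nabI_char. split.
  - intros [j [Hj Hx]]. eapply i_down; [|exact Hj].
    eapply lef_trans. apply imp_one_mono, Hx. apply H3, HH.
  - intros Hx. exists (Imp One x). split; auto. apply H1, HH.
Qed.

Lemma sat_H_impl : R sH -> forall I K, nabI (@impl M I K) = @impl M (nabI I) (nabI K).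
Proof.
  intros HH I K. assert (HN : R sN \/ R sH) by auto.
  apply ideal_ext. intros c.
  change (mem (nabI (impl M I K)) c <-> mem (impl M (nabI I) (nabI K)) c).
  rewrite nabI_charH, !impl_char by exact HH. split.
  - intros H x Hx. rewrite nabI_charH in Hx by exact HH. rewrite nabI_charH by exact HH.
    specialize (H _ Hx). eapply i_down; [|exact H].
    eapply lef_trans; [|apply H3, HH]. apply imp_one_mono.
    eapply lef_trans; [|apply nab_tens_up, HN].
    apply tens_mono. apply H1, HH. apply nab_mono, H1, HH.
  - intros H a Ha.
    assert (Ha' : mem (nabI I) (Nab a)) by (apply nabI_in; auto).
    specialize (H _ Ha'). rewrite nabI_charH in H by exact HH.
    eapply i_down; [|exact H].
    eapply lef_trans. apply H4. apply imp_one_mono.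
    eapply lef_trans. apply r_oplax, tens_intro.
    apply tens_mono. apply lef_refl. apply nab_mono, nab_imp_one.
Qed.

Lemma in_ST_M : in_ST M R.
Proof.
  intros s Hs. destruct s; cbn [sat_scheme].
  - apply sat_N; auto.
  - destruct (sat_N (or_intror Hs)) as [A B]. split; [exact A|split; [exact B|]].
    apply sat_H_impl, Hs.
  - intros I x. apply nabI_min. intros a Ha. eapply i_down; [|exact Ha].
    apply r_P; auto. apply ax_id.
  - intros I x Hx. eapply i_down. apply r_F; auto. apply ax_id. apply nabI_in; auto.
  - intros I H. rewrite bot_pr in *. apply leI_antisym.
    + intros a Ha. apply r_wF; auto.
      assert (Hn : mem (nabI I) (Nab a)) by (apply nabI_in; auto).
      change (nabI I = pr Bot) in H. rewrite H in Hn. exact Hn.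
    + intros x Hx. eapply i_down. exact Hx. apply i_bot.
Qed.

Lemma locale_M : st = true -> is_locale M.
Proof.
  intros Hst. split.
  - intros I J. apply leI_antisym.
    + apply (join_ub _ (mulI I J)). split.
      * intros x. apply mulI_min. intros a b Ha Hb. eapply i_down; [|exact Ha].
        apply tens_split. exact (r_weak [a] [] b Hst (ax_id R st a)).
      * intros x. apply mulI_min. intros a b Ha Hb. eapply i_down; [|exact Hb].
        apply tens_split. exact (r_weak [] [b] a Hst (ax_id R st b)).
    + apply join_least. intros X [H1 H2] x Hx.
      eapply i_down. exact (r_contr [] [] x Hst (tens_intro x x)).
      apply mulI_in; auto.
  - change (unitI = top M). rewrite top_pr, unit_pr. apply pr_eq. apply ax_top.
    exact (r_weak [] [] Top Hst (ax_one R st)).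
Qed.

End Lind.

Theorem theorem7p12 (R : scheme -> Prop) :
  (exists S : ncspacetime, in_ST S R /\
     forall (G : list formula) (A : formula), models S G A -> derivable R false G A) /\
  (exists S : ncspacetime, in_iST S R /\
     forall (G : list formula) (A : formula), models S G A -> derivable R true G A).
Proof.
  split.
  - exists (M R false). split. apply in_ST_M. apply complete.
  - exists (M R true). split. split. apply locale_M; auto. apply in_ST_M. apply complete.
Qed.
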